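(* Let $k\ge3$, $\omega=\lceil\ln\ln n\rceil$ and let $p=p(n)=O(1/n)$. Let $(\tilde G,\hat\sigma_1,\hat\sigma_2)$ be drawn from the binomial planted replica model $\tilde\pi_{n,p}$. (1) Let $\mathcal K(G)$ be the number of vertices $v$ of a graph $G$ such that $\partial^\omega(G,v)$ contains a cycle. Then $\tilde\pi_{n,p}[\mathcal K(\tilde G)>n^{2/3}]=o(n^{-1/2})$. (2) Let $\mathcal L$ be the event that there is a vertex $v$ such that $\partial^\omega(\tilde G,v)$ contains more than $n^{0.1}$ vertices. Then $\tilde\pi_{n,p}[\mathcal L]\leq\exp(-\Omega(\ln^2n))$.
   Context: For maps $\sigma,\tau:[n]\to[k]$, a pair $\{u,v\}$ is bichromatic under both if $\sigma(u)\ne\sigma(v)$ and $\tau(u)\ne\tau(v)$. The binomial planted replica model $\tilde\pi_{n,p}$ is the distribution of $(\tilde G,\hat\sigma_1,\hat\sigma_2)$ obtained by choosing $\hat\sigma_1,\hat\sigma_2:[n]\to[k]$ independently and uniformly, and then including each pair of vertices of $[n]$ that is bichromatic under both $\hat\sigma_1$ and $\hat\sigma_2$ as an edge independently with probability $p$. $\partial^\omega(G,v)$ is the subgraph of $G$ induced on vertices at distance at most $\omega$ from $v$. *)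

(* Defs.v *)
From HB Require Import structures.
From mathcomp Require Import all_boot all_order all_algebra.
From mathcomp Require Import reals sequences exp.
Set Implicit Arguments. Unset Strict Implicit. Unset Printing Implicit Defensive.
Import Order.TTheory GRing.Theory Num.Theory.
Local Open Scope ring_scope.

Section ReplicaModel.
Variables (R : realType) (n k : nat).

Definition coloring := {ffun 'I_n -> 'I_k}.
(* a graph on [n]: a set of (2-element) vertex sets *)
Definition graph := {set {set 'I_n}}.

Definition bichrom2 (s1 s2 : coloring) (A : {set 'I_n}) : bool :=
  [exists u : 'I_n, exists v : 'I_n,
     [&& A == [set u; v], u != v, s1 u != s1 v & s2 u != s2 v]].

Definition replica_weight (p : R) (G : graph) (s1 s2 : coloring) : R :=
  ((k ^ (2 * n))%:R)^-1 *
  \prod_(A : {set 'I_n})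
     (if bichrom2 s1 s2 A then (if A \in G then p else 1 - p)
      else (if A \in G then 0 else 1)).

Definition replica_prob (p : R) (Ev : graph -> bool) : R :=
  \sum_(s1 : coloring) \sum_(s2 : coloring) \sum_(G : graph)
     (if Ev G then replica_weight p G s1 s2 else 0).

Definition adj (G : graph) : rel 'I_n := fun u v => (u != v) && ([set u; v] \in G).

Fixpoint ball (G : graph) (v : 'I_n) (r : nat) : {set 'I_n} :=
  match r with
  | 0 => [set v]
  | r'.+1 => let B := ball G v r' in
             B :|: [set w | [exists u in B, adj G u w]]
  end.

Definition has_cycle_in (G : graph) (S : {set 'I_n}) : bool :=
  [exists m : 'I_n.+1, exists t : m.-tuple 'I_n,
     [&& (2 < m)%N, uniq t, all (fun x => x \in S) t & cycle (adj G) t]].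

Definition omega : nat := `|Num.ceil (ln (ln (n%:R : R)))|%N.

Definition Kcount (G : graph) : nat :=
  #|[set v | has_cycle_in G (ball G v omega)]|.

Definition Lev (G : graph) : bool :=
  [exists v : 'I_n, (n%:R : R) `^ (1 / 10) < (#|ball G v omega|)%:R].

End ReplicaModel.

(* Main.v *)
Require Import Defs.
From HB Require Import structures.
From mathcomp Require Import all_boot all_order all_algebra.
From mathcomp Require Import reals sequences exp.
From mathcomp Require Import ring lra.
Import Order.TTheory GRing.Theory Num.Theory.
Local Open Scope ring_scope.

Lemma sum_set_prod (R : comPzSemiRingType) (X : finType) (h : X -> bool -> R) :
  \sum_(S : {set X}) \prod_(x : X) h x (x \in S) = \prod_(x : X) (h x true + h x false).
Proof.
have -> : \prod_(x : X) (h x true + h x false) = \prod_(x : X) \sum_(b : bool) h x b.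
  by apply: eq_bigr => x _; rewrite big_bool.
rewrite bigA_distr_bigA /=.
rewrite (reindex (fun f : {ffun X -> bool} => [set x | f x])) /=; last first.
  exists (fun S : {set X} => [ffun x => x \in S]) => f _.
    by apply/ffunP => x; rewrite ffunE inE.
  by apply/setP => x; rewrite !inE ffunE.
by apply: eq_bigr => f _; apply: eq_bigr => x _; rewrite inE.
Qed.

Section Prob.
Variables (R : realType) (n k : nat) (p : R).
Hypothesis hp : 0 <= p <= 1.

Lemma weight_ge0 G s1 s2 : 0 <= @replica_weight R n k p G s1 s2.
Proof.
case/andP: hp => p0 p1.
rewrite /replica_weight mulr_ge0 // ?invr_ge0 ?ler0n //.
apply: prodr_ge0 => A _.
by case: bichrom2; case: (A \in G) => //; rewrite subr_ge0.
Qed.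

Lemma sum_prob (I : finType) (E : I -> graph n -> bool) :
  \sum_i replica_prob k p (E i) =
  \sum_(s1 : coloring n k) \sum_(s2 : coloring n k) \sum_(G : graph n)
     (\sum_i ((E i G)%:R : R)) * @replica_weight R n k p G s1 s2.
Proof.
rewrite /replica_prob exchange_big; apply: eq_bigr => s1 _.
rewrite exchange_big; apply: eq_bigr => s2 _.
rewrite exchange_big; apply: eq_bigr => G _.
rewrite mulr_suml; apply: eq_bigr => i _.
by case: (E i G); rewrite ?mul1r ?mul0r.
Qed.

Lemma prob_le_sum (Ev : graph n -> bool) (I : finType) (E : I -> graph n -> bool) (c : R) :
  0 < c -> (forall G, Ev G -> c <= \sum_i ((E i G)%:R : R)) ->
  replica_prob k p Ev <= c^-1 * \sum_i replica_prob k p (E i).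
Proof.
move=> c0 hE; rewrite sum_prob /replica_prob mulr_sumr; apply: ler_sum => s1 _.
rewrite mulr_sumr; apply: ler_sum => s2 _.
rewrite mulr_sumr; apply: ler_sum => G _.
case: ifP => hG; last first.
  apply: mulr_ge0; first by rewrite invr_ge0 ltW.
  apply: mulr_ge0; last exact: weight_ge0.
  by apply: sumr_ge0 => i _; rewrite ler0n.
rewrite mulrA -[X in X <= _]mul1r ler_wpM2r ?weight_ge0 //.
by rewrite ler_pdivlMl // mulr1 hE.
Qed.

Lemma prob_mono (Ev Ev' : graph n -> bool) :
  (forall G, Ev G -> Ev' G) -> replica_prob k p Ev <= replica_prob k p Ev'.
Proof.
move=> h; rewrite /replica_prob; apply: ler_sum => s1 _; apply: ler_sum => s2 _.
apply: ler_sum => G _; case: ifP => e; first by rewrite (h _ e).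
by case: ifP => _ //; rewrite weight_ge0.
Qed.

Lemma prob_cond (b : bool) (Ev : graph n -> bool) :
  replica_prob k p (fun G => b && Ev G) = (b%:R) * replica_prob k p Ev.
Proof.
case: b; first by rewrite mul1r.
by rewrite mul0r /replica_prob; apply: big1 => s1 _; apply: big1 => s2 _; apply: big1.
Qed.

End Prob.

Section ProbSub.
Variables (R : realType) (n k : nat) (p : R).
Hypothesis hp : 0 <= p <= 1.
Hypothesis hk : (0 < k)%N.

Lemma prob_subset (F : {set {set 'I_n}}) :
  replica_prob k p (fun G : graph n => F \subset G) <= p ^+ #|F|.
Proof.
case/andP: hp => p0 p1.
pose c : R := ((k ^ (2 * n))%:R)^-1.
have key : forall s1 s2 : coloring n k,
    \sum_(G : graph n) (if F \subset G then @replica_weight R n k p G s1 s2 else 0)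
    <= c * p ^+ #|F|.
  move=> s1 s2.
  pose g (A : {set 'I_n}) (b : bool) : R :=
    if bichrom2 s1 s2 A then (if b then p else 1 - p) else (if b then 0 else 1).
  pose h (A : {set 'I_n}) (b : bool) : R := if (A \in F) && ~~ b then 0 else g A b.
  have -> : \sum_(G : graph n) (if F \subset G then @replica_weight R n k p G s1 s2 else 0)
      = c * \sum_(G : {set {set 'I_n}}) \prod_(A : {set 'I_n}) h A (A \in G).
    rewrite mulr_sumr; apply: eq_bigr => G _.
    rewrite /replica_weight -/c; case: ifP => sub.
      congr (_ * _); apply: eq_bigr => A _.
      rewrite /h; case: (boolP ((A \in F) && ~~ (A \in G))) => [/andP [AF nAG]|_] //.
      by move: nAG; rewrite (subsetP sub _ AF).
    have /subsetPn [A AF nAG] : ~~ (F \subset G) by rewrite sub.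
    by rewrite (bigD1 A) //= /h AF nAG /= mul0r mulr0.
  rewrite sum_set_prod ler_wpM2l ?invr_ge0 ?ler0n //.
  rewrite -prodr_const [X in _ <= X]big_mkcond /=.
  apply: ler_prod => A _; rewrite /h /g.
  case: (A \in F) => /=.
    by case: bichrom2; rewrite ?addr0 ?lexx ?p0 ?p1.
  by case: bichrom2; rewrite ?subrKC ?addr0 ?add0r ?ler01 ?lexx.
rewrite /replica_prob.
apply: le_trans (_ : \sum_(s1 : coloring n k) \sum_(s2 : coloring n k) c * p ^+ #|F| <= _).
  by apply: ler_sum => s1 _; apply: ler_sum => s2 _; apply: key.
rewrite !sumr_const -mulrnA -mulr_natr mulrAC.
rewrite /c card_ffun !card_ord -expnD addnn -mul2n mulVf ?mul1r //.
by rewrite pnatr_eq0 -lt0n expn_gt0 hk.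
Qed.

End ProbSub.

Module GraphPart.
Local Open Scope nat_scope.


Lemma cycle_nbrs (T : eqType) (e : rel T) (s : seq T) (x : T) :
  x \in s -> uniq s -> 2 < size s -> cycle e s ->
  exists y z, [/\ y \in s, z \in s, e x y, e z x & y != z].
Proof.
move=> xs us ss cs.
have := rot_index xs; set r := drop _ _ ++ _ => er.
have : uniq (x :: r) by rewrite -er rot_uniq.
have : cycle e (x :: r) by rewrite -er rot_cycle.
have : size (x :: r) = size s by rewrite -er size_rot.
have memr : forall u, u \in r -> u \in s.
  by move=> u ur; rewrite -(mem_rot (index x s)) er inE ur orbT.
case: r memr {er} => [|y [|z' r']] memr //=.
- by move=> h; rewrite -h in ss.
- by move=> h; rewrite -h in ss.
move=> _ /andP [exy]; rewrite rcons_path => /andP [_ elx].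
case/andP => _ /andP [ynr _].
exists y, (last z' r'); split.
- by apply: memr; rewrite inE eqxx.
- by apply: memr; rewrite inE mem_last orbT.
- exact: exy.
- by case/andP: elx.
apply/eqP => eyl; move: ynr; rewrite eyl mem_last //.
Qed.

Section Graph.
Variables (n : nat) (G : graph n) (v : 'I_n) (w : nat).

Local Notation B r := (ball G v r).

Lemma ballS r : B r \subset B r.+1.
Proof. by rewrite /= subsetUl. Qed.

Lemma ball_mono r r' : (r <= r')%N -> B r \subset B r'.
Proof.
elim: r' => [|r' IH]; first by rewrite leqn0 => /eqP ->.
rewrite leq_eqVlt => /orP [/eqP -> //|]; rewrite ltnS => h.
exact: subset_trans (IH h) (ballS r').
Qed.
Arguments ball_mono {r r'}.

Lemma ballSE r x : (x \in B r.+1) = (x \in B r) || [exists u in B r, adj G u x].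
Proof. by rewrite /= !inE. Qed.

Lemma v_ball r : v \in B r.
Proof. exact: (subsetP (ball_mono (leq0n r)) v (set11 v)). Qed.

Definition lev x := find (fun r => x \in B r) (iota 0 w.+1).

Lemma lev_le x : x \in B w -> (lev x <= w)%N.
Proof.
move=> xb; have h : has (fun r => x \in B r) (iota 0 w.+1).
  by apply/hasP; apply: (ex_intro2 _ _ w) => //; rewrite mem_iota add0n ltnSn.
by move: h; rewrite has_find size_iota ltnS.
Qed.
Arguments lev_le {x}.

Lemma in_ball_lev x : x \in B w -> x \in B (lev x).
Proof.
move=> xb; have h : has (fun r => x \in B r) (iota 0 w.+1).
  by apply/hasP; apply: (ex_intro2 _ _ w) => //; rewrite mem_iota add0n ltnSn.
have := nth_find 0 h; rewrite nth_iota ?add0n //.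
by rewrite ltnS lev_le.
Qed.
Arguments in_ball_lev {x}.

Lemma lev_min x r : (r <= w)%N -> x \in B r -> (lev x <= r)%N.
Proof.
move=> rw xr; rewrite leqNgt; apply/negP => lt.
by have := before_find 0 lt; rewrite nth_iota ?add0n ?xr.
Qed.
Arguments lev_min {x r}.

Lemma lev0 x : x \in B w -> lev x = 0%N -> x = v.
Proof. by move=> xb h; have := in_ball_lev xb; rewrite h /= inE => /eqP. Qed.
Arguments lev0 {x}.

Lemma lev_v : lev v = 0%N.
Proof. by apply/eqP; rewrite -leqn0 lev_min //= inE. Qed.

Definition par x := if lev x is r.+1 then odflt x [pick u | (u \in B r) && adj G u x] else x.

Lemma par_spec x : x \in B w -> (0 < lev x)%N ->
  [/\ adj G (par x) x, par x \in B w & (lev (par x) < lev x)%N].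
Proof.
move=> xb; have lw := lev_le xb; have xl := in_ball_lev xb.
rewrite /par; case e: (lev x) => [|r] // _.
rewrite e in xl lw.
have nxr : x \notin B r.
  apply/negP => xr; have := lev_min (ltnW lw) xr; by rewrite e ltnn.
have : [exists u in B r, adj G u x].
  by move: xl; rewrite ballSE (negbTE nxr).
case/existsP => u0 hu0.
case: pickP => [u /andP [ur aux]|/(_ u0)]; last by rewrite hu0.
have uw : u \in B w by apply: (subsetP (ball_mono (ltnW lw))).
split => //; rewrite ltnS; exact: lev_min (ltnW lw) ur.
Qed.
Arguments par_spec {x}.

Lemma par0 x : lev x = 0%N -> par x = x.
Proof. by rewrite /par => ->. Qed.

Lemma par_ball x : x \in B w -> par x \in B w.
Proof.
move=> xb; case: (posnP (lev x)) => [h|h]; first by rewrite par0.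
by case: (par_spec xb h).
Qed.
Arguments par_ball {x}.

Lemma iter_ball x i : x \in B w -> iter i par x \in B w.
Proof. by move=> xb; elim: i => //= i IH; apply: par_ball. Qed.
Arguments iter_ball {x}.

Lemma iter_lev x i : x \in B w -> (lev (iter i par x) <= lev x - i)%N.
Proof.
move=> xb; elim: i => [|i IH] /=; first by rewrite subn0.
have yb := iter_ball i xb; set y := iter i par x in IH yb *.
case: (posnP (lev y)) => [h|h].
  by rewrite par0 // h.
case: (par_spec yb h) => _ _ lt.
by rewrite subnS -ltnS (leq_trans lt) // (leq_trans IH) // leqSpred.
Qed.
Arguments iter_lev {x}.

Definition tpath x := [set iter (val i) par x | i : 'I_w.+1].

Lemma tpath_ball x y : x \in B w -> y \in tpath x -> y \in B w.
Proof. by move=> xb /imsetP [i _ ->]; apply: iter_ball. Qed.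
Arguments tpath_ball {x}.

Lemma tpath_self x : x \in tpath x.
Proof. by apply/imsetP; exists ord0. Qed.

Lemma tpath_v x : x \in B w -> v \in tpath x.
Proof.
move=> xb; apply/imsetP; exists (Ordinal (leq_ltn_trans (lev_le xb) (ltnSn w))) => //=.
symmetry; apply: lev0; first exact: iter_ball.
by apply/eqP; rewrite -leqn0 (leq_trans (iter_lev _ xb)) // subnn.
Qed.
Arguments tpath_v {x}.

Lemma tpath_par x y : x \in B w -> y \in tpath x -> y != v -> par y \in tpath x.
Proof.
move=> xb /imsetP [i _ ->] ne.
have [lt|] := ltnP i w.
  by apply/imsetP; exists (Ordinal (lt : (i.+1 < w.+1)%N)).
move=> wi; case/eqP: ne; apply: lev0; first exact: iter_ball.
apply/eqP; rewrite -leqn0 (leq_trans (iter_lev _ xb)) // leqn0 subn_eq0.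
exact: leq_trans (lev_le xb) wi.
Qed.
Arguments tpath_par {x}.

Lemma card_tpath x : (#|tpath x| <= w.+1)%N.
Proof. by rewrite (leq_trans (leq_imset_card _ _)) // card_ord. Qed.


Lemma adj_neq a b : adj G a b -> a != b.
Proof. by case/andP. Qed.
Arguments adj_neq {a b}.

Lemma adj_in a b : adj G a b -> [set a; b] \in G.
Proof. by case/andP. Qed.
Arguments adj_in {a b}.

Lemma par_ne x u : u \in B w -> lev u <= lev x -> x != u -> par u != x.
Proof.
move=> ub lu ne; case: (posnP (lev u)) => [h|h].
  by rewrite par0 // eq_sym.
case: (par_spec ub h) => _ _ lt; apply/eqP => e.
by move: (leq_trans lt lu); rewrite e ltnn.
Qed.

Lemma nontree_edge : has_cycle_in G (B w) ->
  exists a b, [/\ a \in B w, b \in B w, adj G a b, par a != b & par b != a].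
Proof.
case/existsP => m /existsP [t /and4P [m2 ut allt ct]].
have m0 : 0 < m by apply: leq_trans m2.
pose i0 : 'I_m := Ordinal m0.
case: (@arg_maxnP _ i0 xpredT (fun i => lev (tnth t i)) isT) => i _ hmax.
set x := tnth t i.
have xt : x \in t by apply: mem_tnth.
have tb : forall u, u \in t -> u \in B w by move=> u ut'; apply: (allP allt).
have tmax : forall u, u \in t -> lev u <= lev x.
  by move=> u /tnthP [j ->]; apply: hmax.
have [y [z [yt zt exy ezx nyz]]] := @cycle_nbrs _ _ _ _ xt ut (eq_ind_r (fun q => 2 < q) m2 (size_tuple t)) ct.
case e: (par x == y).
- exists z, x; split => //; first exact: tb.
  + exact: tb.
  + by apply: par_ne; [exact: tb | exact: tmax | rewrite eq_sym; exact: adj_neq ezx].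
  + by rewrite (eqP e).
- exists x, y; split => //; first exact: tb.
  + exact: tb.
  + by rewrite e.
  + by apply: par_ne; [exact: tb | exact: tmax | exact: adj_neq exy].
Qed.

Definition pairs (S : {set 'I_n}) : {set {set 'I_n}} :=
  [set A : {set 'I_n} | (A \subset S) && (#|A| == 2)].

Lemma witness : has_cycle_in G (B w) ->
  exists (S : {set 'I_n}) (F : {set {set 'I_n}}), [/\ v \in S, #|S| <= 2 * w.+1, F \subset pairs S, #|F| = #|S| & F \subset G].
Proof.
case/nontree_edge => a [b [ab bb eab pab pba]].
set S := tpath a :|: tpath b.
have Sb : forall x, x \in S -> x \in B w.
  by move=> x /setUP [] h; [exact: tpath_ball ab h | exact: tpath_ball bb h].
have Spar : forall x, x \in S -> x != v -> par x \in S.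
  move=> x /setUP [] h ne; apply/setUP; [left; exact: tpath_par ab h ne | right; exact: tpath_par bb h ne].
have Spos : forall x, x \in S -> x != v -> 0 < lev x.
  move=> x xS ne; rewrite lt0n; apply/negP => /eqP h; case/eqP: ne; exact: lev0 (Sb x xS) h.
have vS : v \in S by apply/setUP; left; exact: tpath_v ab.
have aS : a \in S by apply/setUP; left; exact: tpath_self.
have bS : b \in S by apply/setUP; right; exact: tpath_self.
pose f x := [set x; par x].
set T := [set f x | x in S :\ v].
have Tinj : {in S :\ v &, injective f}.
  move=> x y /setD1P [nx xS] /setD1P [ny yS] e.
  case: (eqVneq x y) => // nxy; exfalso.
  have h1 : x \in f y by rewrite -e /f set21.
  have h2 : y \in f x by rewrite e /f set21.
  move: h1 h2; rewrite /f !in_set2.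
  case/orP => [/eqP exy|/eqP ex]; first by rewrite exy eqxx in nxy.
  case/orP => [/eqP eyx|/eqP ey]; first by rewrite eyx eqxx in nxy.
  case: (par_spec (Sb x xS) (Spos x xS nx)) => _ _.
  case: (par_spec (Sb y yS) (Spos y yS ny)) => _ _.
  rewrite -ex -ey => l1 l2; by move: (ltn_trans l1 l2); rewrite ltnn.
have abT : [set a; b] \notin T.
  apply/imsetP => [[x /setD1P [nx xS] e]].
  have nab := adj_neq eab.
  have ha : a \in f x by rewrite -e set21.
  have hb : b \in f x by rewrite -e set22.
  move: ha hb; rewrite /f !in_set2.
  case/orP => /eqP ea; case/orP => /eqP eb.
  - by move: nab; rewrite ea eb eqxx.
  - by move: pab; rewrite ea eb eqxx.
  - by move: pba; rewrite ea eb eqxx.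
  - by move: nab; rewrite ea eb eqxx.
exists S, ([set a; b] |: T); split => //.
- rewrite mul2n -addnn (leq_trans (leq_card_setU _ _).1) //.
  by rewrite leq_add ?card_tpath.
- apply/subsetP => A /setU1P [->|/imsetP [x /setD1P [nx xS] ->]]; rewrite inE.
    by rewrite subUset !sub1set aS bS cards2 (adj_neq eab).
  case: (par_spec (Sb x xS) (Spos x xS nx)) => ep _ _.
  rewrite /f subUset !sub1set xS Spar // cards2.
  by have := adj_neq ep; rewrite eq_sym => ->.
- rewrite cardsU1 abT card_in_imset // (cardsD1 v S) vS.
  by rewrite add1n.
- apply/subsetP => A /setU1P [->|/imsetP [x /setD1P [nx xS] ->]].
    exact: adj_in eab.
  case: (par_spec (Sb x xS) (Spos x xS nx)) => ep _ _.
  by rewrite /f setUC; apply: adj_in.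
Qed.

Lemma ball_card (D : nat) : (forall u, #|[set x | adj G u x]| < D) ->
  forall r, #|B r| <= D ^ r.
Proof.
move=> hD; have D0 : 0 < D by apply: leq_ltn_trans (hD v).
elim=> [|r IH]; first by rewrite /= cards1.
rewrite /= expnSr.
have e : [set x | [exists u in B r, adj G u x]] = \bigcup_(u in B r) [set x | adj G u x].
  apply/setP => x; rewrite !inE; apply/existsP/bigcupP.
    by case=> u /andP [ub ux]; exists u => //; rewrite inE.
  by case=> u ub; rewrite inE => ux; exists u; rewrite ub.
rewrite (leq_trans (leq_card_setU _ _).1) // e.
rewrite (leq_trans (leq_add (leqnn _) (unstable.card_big_setU _ _ _))) //.
rewrite (leq_trans (leq_add (leqnn _) (_ : _ <= \sum_(u in B r) D.-1))) //.
  by apply: leq_sum => u _; rewrite -ltnS prednK.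
rewrite sum_nat_const -{1}(muln1 #|B r|) -mulnDr add1n prednK // leq_mul2r IH orbT //.
Qed.

End Graph.
Arguments pairs {n}.

End GraphPart.
Import GraphPart.


Definition Icnt (n : nat) := ('I_n * ({set 'I_n} * {set {set 'I_n}}))%type.

Section Count.
Variables (R : realType) (n : nat).

Lemma sum_setp (p : R) : \sum_(S : {set 'I_n}) p ^+ #|S| = (1 + p) ^+ n.
Proof.
have := @sum_set_prod R _ (fun (x : 'I_n) (b : bool) => if b then p else 1).
have -> : \prod_(x : 'I_n) ((if true then p else 1) + (if false then p else 1)) = (1 + p) ^+ n.
  by rewrite prodr_const card_ord addrC.
move=> <-; apply: eq_bigr => S _.
by rewrite -big_mkcond /= prodr_const.
Qed.

Lemma card_pairs (S : {set 'I_n}) : (#|pairs S| <= #|S| * #|S|)%N.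
Proof.
have sub : pairs S \subset [set [set u.1; u.2] | u in setX S S].
  apply/subsetP => A; rewrite inE => /andP [AS /cards2P [x [y [_ eA]]]].
  apply/imsetP; exists (x, y) => //.
  rewrite inE /=; move: AS; rewrite eA subUset !sub1set => /andP [-> ->] //.
by rewrite (leq_trans (subset_leq_card sub)) // (leq_trans (leq_imset_card _ _)) // cardsX.
Qed.

Lemma sum_ind_card (S : {set 'I_n}) : \sum_(v : 'I_n) ((v \in S)%:R : R) = #|S|%:R.
Proof.
rewrite -sum1_card natr_sum [RHS]big_mkcond /=; apply: eq_bigr => v _.
by case: (v \in S).
Qed.

Lemma sum_ind_subset (P : {set {set 'I_n}}) :
  \sum_(F : {set {set 'I_n}}) ((F \subset P)%:R : R) = (2 ^ #|P|)%:R.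
Proof.
rewrite -card_powerset -sum1_card natr_sum [RHS]big_mkcond /=; apply: eq_bigr => F _.
by rewrite powersetE; case: (F \subset P).
Qed.

End Count.

Lemma sum_Icnt (R : realType) (n : nat) (f : 'I_n -> {set 'I_n} -> {set {set 'I_n}} -> R) :
  \sum_(i : Icnt n) f i.1 i.2.1 i.2.2 =
  \sum_(v : 'I_n) \sum_(S : {set 'I_n}) \sum_(F : {set {set 'I_n}}) f v S F.
Proof.
rewrite -(pair_bigA _ (fun v q => f v q.1 q.2)) /=.
by apply: eq_bigr => v _; rewrite -(pair_bigA _ (fun S F => f v S F)).
Qed.

Section Part1.
Variables (R : realType) (n k : nat) (p : R).
Hypothesis hp : 0 <= p <= 1.
Hypothesis hk : (0 < k)%N.


Lemma K_bound (om : nat) (t : R) : 0 < t ->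
  replica_prob k p (fun G : graph n => t < (#|[set v | has_cycle_in G (ball G v om)]|)%:R)
  <= t^-1 * ((2 * om.+1)%:R * 2 ^+ ((2 * om.+1) * (2 * om.+1)) * (1 + p) ^+ n).
Proof.
move=> t0; set L := (2 * om.+1)%N.
pose cond (i : Icnt n) := [&& i.1 \in i.2.1, (#|i.2.1| <= L)%N, i.2.2 \subset pairs i.2.1 &
   #|i.2.2| == #|i.2.1|].
pose E := (fun (i : Icnt n) (G : graph n) => cond i && (i.2.2 \subset G)).
have H := @prob_le_sum R n k p hp (fun G : graph n => t < (#|[set v | has_cycle_in G (ball G v om)]|)%:R) (Icnt n) E t t0.
apply: le_trans (H _) _.
  move=> G h; apply: le_trans (ltW h) _; rewrite -natr_sum ler_nat.
  set Kset := [set v | _].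
  have sub : Kset \subset [set i.1 | i in [set i : Icnt n | cond i && (i.2.2 \subset G)]].
    apply/subsetP => v; rewrite inE => /witness [S [F [vS cS FP cF FG]]].
    apply/imsetP; exists (v, (S, F)) => //.
    by rewrite inE /cond /= vS cS FP cF eqxx FG.
  rewrite (leq_trans (subset_leq_card sub)) // (leq_trans (leq_imset_card _ _)) //.
  rewrite -sum1_card big_mkcond /=; apply: leq_sum => i _.
  by rewrite inE /E; case: (_ && _).
apply: ler_wpM2l; first by rewrite invr_ge0 ltW.
apply: le_trans (_ : \sum_(i : Icnt n) (cond i)%:R * p ^+ #|i.2.1| <= _).
  apply: ler_sum => i _; rewrite prob_cond //.
  case ci: (cond i); rewrite ?mul0r // !mul1r.
  case/and4P: ci => _ _ _ /eqP <-; exact: prob_subset.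
rewrite (eq_bigr (fun i => (fun v S F => (cond (v, (S, F)))%:R * p ^+ #|S|) i.1 i.2.1 i.2.2));
  last by case=> v [S F].
rewrite (@sum_Icnt R n (fun v S F => (cond (v, (S, F)))%:R * p ^+ #|S|)).
rewrite exchange_big /= -sum_setp mulr_sumr; apply: ler_sum => S _.
case cS: (#|S| <= L)%N; last first.
  have p0 : 0 <= p by case/andP: hp.
  rewrite big1; first by rewrite !mulr_ge0 ?ler0n ?exprn_ge0.
  by move=> v _; apply: big1 => F _; rewrite /cond /= cS andbF mul0r.
apply: le_trans (_ : \sum_(v : 'I_n) \sum_(F : {set {set 'I_n}})
    ((v \in S)%:R * (F \subset pairs S)%:R * p ^+ #|S|) <= _).
  apply: ler_sum => v _; apply: ler_sum => F _; rewrite /cond /= cS.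
  have p0 : 0 <= p by case/andP: hp.
  by case: (v \in S); case: (F \subset pairs S); case: (#|F| == #|S|);
    rewrite /= ?(mul0r, mul1r) ?lexx ?exprn_ge0.
rewrite [X in X <= _](_ : _ = (\sum_(v : 'I_n) ((v \in S)%:R : R)) * (\sum_(F : {set {set 'I_n}}) ((F \subset pairs S)%:R : R)) * p ^+ #|S|); last first.
  by rewrite !mulr_suml; apply: eq_bigr => v _; rewrite mulr_sumr mulr_suml.
rewrite sum_ind_subset sum_ind_card.
have p0 : 0 <= p by case/andP: hp.
rewrite -mulrA mulrA ler_wpM2r ?exprn_ge0 // ler_pM ?ler0n //.
  by rewrite ler_nat.
rewrite -natrX ler_nat leq_pexp2l // (leq_trans (@card_pairs n S)) //.
by rewrite leq_mul.
Qed.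

End Part1.

Lemma binom_le (R : realType) (n D : nat) (x : R) : 0 <= x ->
  ('C(n, D))%:R * x ^+ D <= (1 + x) ^+ n.
Proof.
move=> x0; case: (ltnP n D) => [lt|le].
  by rewrite bin_small // mul0r exprn_ge0 // addr_ge0.
rewrite exprDn (bigD1 (Ordinal (le : (D < n.+1)%N))) //= expr1n mul1r.
rewrite mulr_natl -[X in X <= _]addr0 lerD2l.
apply: sumr_ge0 => i _; rewrite expr1n mul1r mulrn_wge0 // exprn_ge0 //.
Qed.

Section Part2.
Variables (R : realType) (n k : nat) (p : R).
Hypothesis hp : 0 <= p <= 1.
Hypothesis hk : (0 < k)%N.

Lemma set2_inj (u x y : 'I_n) : [set u; x] = [set u; y] -> x = y.
Proof.
move=> e.
have hx : x \in [set u; y] by rewrite -e set22.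
have hy : y \in [set u; x] by rewrite e set22.
move: hx hy; rewrite !in_set2 => /orP [/eqP xu|/eqP //] /orP [/eqP yu|/eqP //].
by rewrite xu yu.
Qed.

Lemma L_bound (om D : nat) (thr : R) : (0 < D)%N -> (D ^ om)%:R <= thr ->
  replica_prob k p (fun G : graph n => [exists v, thr < (#|ball G v om|)%:R])
  <= n%:R * ('C(n, D))%:R * p ^+ D.
Proof.
move=> D0 hthr.
pose E (i : 'I_n * {set 'I_n}) (G : graph n) :=
  (#|i.2| == D) && ([set [set i.1; x] | x in i.2] \subset G).
have H := @prob_le_sum R n k p hp (fun G : graph n => [exists v, thr < (#|ball G v om|)%:R])
  _ E 1 ltr01.
apply: le_trans (H _) _.
  move=> G /existsP [v hv].
  have [u hu] : exists u, (D <= #|[set x | adj G u x]|)%N.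
    apply/existsP; apply: contraLR hv => /existsPn hu.
    rewrite -leNgt (le_trans _ hthr) // ler_nat.
    by apply: ball_card => u; rewrite ltnNge; apply: hu.
  case/card_geqP: hu => s [us ss sub].
  apply: le_trans (_ : ((E (u, [set x in s]) G)%:R : R) <= _).
    rewrite /E /= cardsE (card_uniqP us) ss eqxx /=.
    suff -> : [set [set u; x] | x in [set x in s]] \subset G by [].
    apply/subsetP => A /imsetP [x]; rewrite inE => xs ->.
    by have := sub x xs; rewrite inE => /andP [].
  rewrite (bigD1 (u, [set x in s])) //= lerDl.
  by apply: sumr_ge0 => i _; rewrite ler0n.
rewrite invr1 mul1r.
apply: le_trans (_ : \sum_(i : 'I_n * {set 'I_n}) ((#|i.2| == D)%:R * p ^+ D) <= _).
  apply: ler_sum => -[u W] _.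
  rewrite /E /= prob_cond //.
  case e: (#|W| == D); rewrite ?mul0r ?mul1r //.
  apply: le_trans (@prob_subset R n k p hp hk _) _.
  by rewrite card_imset ?(eqP e) //; apply: set2_inj.
rewrite -(pair_bigA _ (fun (u : 'I_n) (W : {set 'I_n}) => (#|W| == D)%:R * p ^+ D)) /=.
rewrite sumr_const card_ord -mulr_suml.
suff -> : \sum_(W : {set 'I_n}) ((#|W| == D)%:R : R) = ('C(n, D))%:R.
  by rewrite -mulr_natr le_eqVlt; apply/orP; left; apply/eqP; ring.
rewrite -[n in 'C(n, D)](card_ord n) -card_draws -sum1dep_card natr_sum [RHS]big_mkcond /=.
by apply: eq_bigr => W _; case: (_ == _).
Qed.

End Part2.


Section Asym.
Variable R : realType.

Lemma expR_cube (y : R) : 0 <= y -> y ^+ 3 / 6 <= expR y.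
Proof.
move=> y0; have := expR_ge1Dxn 2 y0.
have -> : (3`!)%:R = 6 :> R by [].
move=> h; apply: le_trans h; rewrite lerDr ler01 //.
Qed.

Lemma P1 (y K : R) : 1000 + `|K| <= y -> (2 * y + 4) + (2 * y + 4) ^+ 2 + K <= expR y / 6.
Proof.
move=> hy.
have K0 : 0 <= `|K| by [].
have KK : K <= `|K| by apply: ler_norm.
have y0 : 0 <= y by lra.
have h := @expR_cube y y0.
have h2 : y ^+ 3 / 36 <= expR y / 6 by lra.
apply: le_trans h2.
have e3 : y ^+ 3 = y * y * y by rewrite exprSr expr2.
rewrite e3.
have : y * y * (1000 + `|K|) <= y * y * y by rewrite ler_wpM2l // mulr_ge0.
nra.
Qed.

Lemma P2 (y : R) : 1000 <= y -> 3 * (y + 1) ^+ 2 <= expR y / 10.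
Proof.
move=> hy; have y0 : 0 <= y by lra.
have h := @expR_cube y y0.
have h2 : y ^+ 3 / 60 <= expR y / 10 by lra.
apply: le_trans h2.
have e3 : y ^+ 3 = y * y * y by rewrite exprSr expr2.
rewrite e3.
have : y * y * 1000 <= y * y * y by rewrite ler_wpM2l // mulr_ge0.
nra.
Qed.

Lemma P3 (x K : R) : 3 + `|K| <= x -> x + K - x ^+ 3 <= - x ^+ 2.
Proof.
move=> hx.
have KK : K <= `|K| by apply: ler_norm.
have K0 : 0 <= `|K| by [].
have x0 : 0 <= x by lra.
have e3 : x ^+ 3 = x * x * x by rewrite exprSr expr2.
rewrite e3 expr2.
have : x * x * (3 + `|K|) <= x * x * x by rewrite ler_wpM2l // mulr_ge0.
nra.
Qed.

End Asym.
Arguments expR_cube {R}. Arguments P1 {R y K}. Arguments P2 {R y}. Arguments P3 {R x K}.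


Section Bridge.
Variable R : realType.

Lemma powR_nat (n : nat) (a : R) : (0 < n)%N -> (n%:R : R) `^ a = expR (a * ln (n%:R : R)).
Proof. by move=> n0; rewrite /powR pnatr_eq0 (negbTE (lt0n_neq0 n0)). Qed.

Lemma ceil_nat_bounds (z : R) : 0 <= z ->
  z <= ((`|Num.ceil z|%N)%:R : R) /\ ((`|Num.ceil z|%N)%:R : R) < z + 1.
Proof.
move=> z0.
have c0 : (0 <= Num.ceil z)%R by rewrite ceil_ge0 (lt_le_trans _ z0) // ltrN10.
rewrite natr_absz ger0_norm //.
have /andP [h1 h2] := ceil_itv z.
split => //; move: h1; rewrite intrB /=; lra.
Qed.

Lemma omega_le (n : nat) : 0 <= ln (ln (n%:R : R)) ->
  ((omega R n)%:R : R) <= ln (ln (n%:R : R)) + 1.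
Proof. by move=> h; rewrite /omega; case: (@ceil_nat_bounds _ h) => _ /ltW. Qed.

Lemma ln_ge (a b : R) : 0 < a -> a <= b -> ln a <= ln b.
Proof. by move=> a0 ab; rewrite ler_ln // posrE (lt_le_trans a0 ab). Qed.

Lemma ln_ge_exp (n : nat) (Y : R) : expR Y <= (n%:R : R) -> Y <= ln (n%:R : R).
Proof. by move=> h; rewrite -[X in X <= _]expRK ln_ge // expR_gt0. Qed.

End Bridge.

Section Bridge2.
Variable R : realType.

Lemma powle (a b : R) m : 0 <= a -> a <= b -> a ^+ m <= b ^+ m.
Proof. by move=> a0 ab; apply: lerXn2r; rewrite ?nnegrE // (le_trans a0 ab). Qed.

Lemma ln_ge_expR (Y z : R) : expR Y <= z -> Y <= ln z.
Proof. by move=> h; rewrite -[X in X <= _]expRK ln_ge // expR_gt0. Qed.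

Lemma one_plus_pow (p : R) (n : nat) : 0 <= p -> (1 + p) ^+ n <= expR (n%:R * p).
Proof.
move=> p0; rewrite expRM_natl; apply: powle; first by rewrite addr_ge0.
by rewrite expR_ge1Dx.
Qed.

Lemma two_pow (m : nat) : (2 : R) ^+ m <= expR (m%:R).
Proof.
rewrite -[X in _ <= expR X]mulr1 expRM_natl; apply: powle => //.
by have := expR_ge1Dx (1 : R).
Qed.

Lemma nat_le_exp (m : nat) : (m%:R : R) <= expR (m%:R).
Proof. have := expR_ge1Dx (m%:R : R); lra. Qed.

Lemma large_n (Y : R) (N0 : nat) : exists N : nat, forall n : nat, (N <= n)%N ->
  [/\ (N0 <= n)%N, (0 < n)%N & expR (expR Y) <= (n%:R : R)].
Proof.
exists (maxn N0 (maxn 1 `|Num.ceil (expR (expR Y))|%N)) => n.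
rewrite !geq_max => /and3P [h1 h2 h3]; split => //.
case: (@ceil_nat_bounds R (expR (expR Y))) => [|h _]; first by rewrite ltW // expR_gt0.
by apply: le_trans h _; rewrite ler_nat.
Qed.

End Bridge2.
Arguments powR_nat {R}. Arguments ceil_nat_bounds {R}. Arguments omega_le {R n}.
Arguments powle {R a b}. Arguments ln_ge_expR {R Y z}. Arguments one_plus_pow {R}.
Arguments two_pow {R}. Arguments nat_le_exp {R}. Arguments large_n {R}.


Theorem lemma4p3 (R : realType) (k : nat) (p : nat -> R) :
  (3 <= k)%N ->
  (forall n, 0 <= p n <= 1) ->
  (exists C : R, exists N : nat, forall n : nat, (N <= n)%N -> p n <= C / n%:R) ->
  (forall eps : R, 0 < eps -> exists N : nat, forall n : nat, (N <= n)%N ->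
     @replica_prob R n k (p n)
       (fun G => (n%:R : R) `^ (2 / 3) < (@Kcount R n G)%:R)
     <= eps * (n%:R : R) `^ (- (1 / 2))) /\
  (exists c : R, 0 < c /\ exists N : nat, forall n : nat, (N <= n)%N ->
     @replica_prob R n k (p n) (@Lev R n) <= expR (- (c * ln (n%:R : R) ^+ 2))).
Proof.
move=> k3 hp [C [N0 hC]].
have k0 : (0 < k)%N by apply: leq_trans k3.
have hpn : forall n, (N0 <= n)%N -> (0 < n)%N -> n%:R * p n <= C.
  by move=> n hn n0; rewrite mulrC -ler_pdivlMr ?ltr0n //; exact: hC.
have p0 : forall n, 0 <= p n by move=> n; case/andP: (hp n).
split.
- move=> eps eps0.
  set K := C - ln eps.
  have [N hN] := large_n (1000 + `|K|) N0.
  exists N => n /hN [hn0 n0 hbig].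
  set x := ln (n%:R : R).
  set y := ln x.
  have xge : expR (1000 + `|K|) <= x by apply: ln_ge_expR.
  have yge : 1000 + `|K| <= y by apply: ln_ge_expR.
  have Kn : 0 <= `|K| by [].
  have y0 : 0 <= y by lra.
  have x0 : 0 < x by apply: lt_le_trans (expR_gt0 _) xge.
  have ex : expR y = x by rewrite lnK // posrE.
  have om : ((omega R n)%:R : R) <= y + 1 := @omega_le R n y0.
  set w := omega R n in om.
  have t0 : 0 < (n%:R : R) `^ (2 / 3) by rewrite powR_nat // expR_gt0.
  apply: le_trans (@K_bound R n k (p n) (hp n) k0 w _ t0) _.
  rewrite !powR_nat // -expRN.
  set Lr : R := (2 * w.+1)%N%:R.
  have eL : Lr = 2 * (w%:R + 1) by rewrite /Lr natrM -[w.+1]addn1 natrD.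
  have Lr0 : 0 <= Lr by rewrite /Lr ler0n.
  have hLr : Lr <= 2 * y + 4 by rewrite eL; lra.
  have b1 : Lr * 2 ^+ ((2 * w.+1) * (2 * w.+1)) * (1 + p n) ^+ n <=
            expR Lr * expR (Lr * Lr) * expR C.
    apply: ler_pM; rewrite ?mulr_ge0 ?exprn_ge0 ?addr_ge0 ?p0 //.
      apply: ler_pM; rewrite ?exprn_ge0 //; first exact: nat_le_exp.
      by apply: le_trans (two_pow _) _; rewrite natrM.
    apply: le_trans (one_plus_pow _ n (p0 n)) _.
    by rewrite ler_expR; apply: hpn.
  apply: le_trans (ler_wpM2l (ltW (expR_gt0 _)) b1) _.
  rewrite -!expRD -[X in _ <= X * _](@lnK R eps) ?posrE // -expRD ler_expR.
  rewrite -/x.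
  have h1 := P1 yge.
  have h2 : Lr * Lr <= (2 * y + 4) ^+ 2 by rewrite expr2; apply: ler_pM.
  rewrite ex /K in h1.
  move: h1 h2 hLr; generalize (Lr * Lr) ((2 * y + 4) ^+ 2) => A B.
  move=> h1 h2 hLr.
  clear -h1 h2 hLr; lra.
- exists 1; split; first exact: ltr01.
  set e := expR (1 : R).
  have e2 : 2 <= e by have := expR_ge1Dx (1 : R); rewrite /e => h; clear -h; lra.
  have [N hN] := large_n (1000 + `|e * C|) N0.
  exists N => n /hN [hn0 n0 hbig].
  set x := ln (n%:R : R).
  set y := ln x.
  have xge : expR (1000 + `|e * C|) <= x by apply: ln_ge_expR.
  have yge : 1000 + `|e * C| <= y by apply: ln_ge_expR.
  have Kn : 0 <= `|e * C| by [].
  have y0 : 0 <= y by clear -yge Kn; lra.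
  have x0 : 0 < x by apply: lt_le_trans (expR_gt0 _) xge.
  have ex : expR y = x by rewrite lnK // posrE.
  have xbig : 3 + `|e * C| <= x.
    apply: le_trans xge; have := expR_ge1Dx (1000 + `|e * C|) => h; clear -h; lra.
  have nx : (n%:R : R) = expR x by rewrite lnK // posrE ltr0n.
  have om : ((omega R n)%:R : R) <= y + 1 := @omega_le R n y0.
  set w := omega R n in om.
  case: (ceil_nat_bounds x (ltW x0)); set z := `|Num.ceil x|%N => zx zx1.
  have z0 : (0 < z)%N by rewrite -(ltr0n R); apply: lt_le_trans x0 zx.
  have D0 : (0 < z ^ 3)%N by rewrite expn_gt0 z0.
  have hthr : ((z ^ 3) ^ w)%:R <= (n%:R : R) `^ (1 / 10).
    rewrite powR_nat // -expnM natrX -/x.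
    have ze : (z%:R : R) <= expR (y + 1).
      rewrite expRD ex -/e; apply: ltW; apply: lt_le_trans zx1 _.
      have x1 : 1 <= x by clear -xbig Kn; lra.
      have : x * 2 <= x * e by rewrite ler_wpM2l // ltW.
      clear -x1; move=> h; lra.
    apply: le_trans (powle _ (ler0n _ _) ze) _.
    rewrite -expRM_natl ler_expR natrM.
    have y1000 : 1000 <= y by clear -yge Kn; lra.
    have h := P2 y1000.
    rewrite ex in h.
    have hw : 3%:R * w%:R * (y + 1) <= 3 * (y + 1) ^+ 2.
      rewrite expr2 -mulrA ler_wpM2l //; apply: ler_wpM2r => //; clear -y0; lra.
    move: h hw; generalize (3%:R * w%:R * (y + 1)) ((y + 1) ^+ 2) => A B h hw.
    clear -h hw; lra.
  apply: le_trans (@L_bound R n k (p n) (hp n) k0 w (z ^ 3) _ D0 hthr) _.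
  have ep0 : 0 <= e * p n by rewrite mulr_ge0 ?p0 // ltW // expR_gt0.
  have hb := @binom_le R n (z ^ 3) (e * p n) ep0.
  have hb2 : ('C(n, z ^ 3))%:R * (e * p n) ^+ (z ^ 3) <= expR (e * C).
    apply: le_trans hb _; apply: le_trans (one_plus_pow _ n ep0) _.
    rewrite ler_expR mulrCA; apply: ler_wpM2l; first exact: ltW (expR_gt0 _).
    exact: hpn.
  have eD : e ^+ (z ^ 3) = expR ((z ^ 3)%N%:R) by rewrite /e -expRM_natl mulr1.
  rewrite exprMn eD mulrA in hb2.
  have hb3 : ('C(n, z ^ 3))%:R * p n ^+ (z ^ 3) <= expR (e * C - (z ^ 3)%N%:R).
    rewrite expRD expRN ler_pdivlMr ?expR_gt0 //.
    by apply: le_trans hb2; rewrite mulrAC.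
  rewrite -mulrA nx; apply: le_trans (ler_wpM2l (ltW (expR_gt0 _)) hb3) _.
  rewrite -expRD ler_expR mul1r -/x.
  have hz3 : x ^+ 3 <= (z ^ 3)%N%:R by rewrite natrX; apply: powle => //; exact: ltW.
  have h3 := P3 xbig.
  move: h3 hz3; generalize (x ^+ 3) ((z ^ 3)%N%:R : R) (x ^+ 2) => A B Q h3 hz3.
  clear -h3 hz3; lra.
Qed.
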